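(* Let $\kappa$ be a regular uncountable cardinal and $I$ an ideal on $\kappa$. Then $I$ is subpleasant if and only if $I$ is subnormal.
   Context: An ideal on $\kappa$ is a family of subsets of $\kappa$ closed under subsets and finite unions, which is $<\kappa$-complete and contains all singletons. It is proper if $\kappa\notin I$. For $A\subseteq\kappa$ and $X_\alpha\subseteq\kappa$, $\bigtriangledown_{\alpha\in A}X_\alpha=\{\xi<\kappa:\exists\alpha<\xi\,(\alpha\in A\wedge \xi\in X_\alpha)\}$. $I$ is normal if $X_\alpha\in I$ for all $\alpha<\kappa$ implies $\bigtriangledown_{\alpha<\kappa}X_\alpha\in I$. $I$ is pleasant if whenever $A\in I$ and $X_\alpha\in I$ for all $\alpha$, then $\bigtriangledown_{\alpha\in A}X_\alpha\in I$. $I$ is subnormal if it is contained in a proper normal ideal on $\kappa$, and subpleasant if it is contained in a proper pleasant ideal on $\kappa$. *)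

(* Defs.v *)
(* pure set theory over a type carrying a well-order.
   kappa is modelled as a type T with a strict well-order lt (its elements are
   the ordinals < kappa); subsets of kappa are predicates T -> Prop. *)
From Stdlib Require Import Relations Wellfounded.

Set Implicit Arguments.

Definition injective_fun (A B : Type) (f : A -> B) : Prop :=
  forall x y, f x = f y -> x = y.

Definition card_le (A B : Type) : Prop := exists f : A -> B, injective_fun f.

Definition card_lt (A B : Type) : Prop := card_le A B /\ ~ card_le B A.

Definition strict_well_order (T : Type) (lt : T -> T -> Prop) : Prop :=
  well_founded lt /\ transitive T lt /\
  (forall x y : T, lt x y \/ x = y \/ lt y x).

(* (T, lt) is (the order type of) a cardinal kappa: every proper initial segment
   has cardinality strictly below |T|. *)
Definition is_cardinal (T : Type) (lt : T -> T -> Prop) : Prop :=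
  strict_well_order lt /\
  forall a : T, card_lt {b : T | lt b a} T.

Definition is_regular (T : Type) (lt : T -> T -> Prop) : Prop :=
  forall X : T -> Prop, card_lt {x : T | X x} T ->
    exists a : T, forall x, X x -> lt x a.

Definition uncountable (T : Type) : Prop := ~ card_le T nat.

Definition regular_uncountable_cardinal (T : Type) (lt : T -> T -> Prop) : Prop :=
  is_cardinal lt /\ is_regular lt /\ uncountable T.

Definition is_ideal (T : Type) (I : (T -> Prop) -> Prop) : Prop :=
  (forall X Y : T -> Prop, I X -> (forall x, Y x -> X x) -> I Y) /\
  (forall X Y : T -> Prop, I X -> I Y -> I (fun x => X x \/ Y x)) /\
  (forall (J : Type) (F : J -> T -> Prop), card_lt J T ->
     (forall j, I (F j)) -> I (fun x => exists j, F j x)) /\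
  (forall a : T, I (fun x => x = a)).

Definition proper_ideal (T : Type) (I : (T -> Prop) -> Prop) : Prop :=
  ~ I (fun _ => True).

Definition diag_union (T : Type) (lt : T -> T -> Prop)
  (A : T -> Prop) (X : T -> T -> Prop) : T -> Prop :=
  fun xi => exists alpha, lt alpha xi /\ A alpha /\ X alpha xi.

Definition normal_ideal (T : Type) (lt : T -> T -> Prop)
  (I : (T -> Prop) -> Prop) : Prop :=
  forall X : T -> T -> Prop, (forall a, I (X a)) ->
    I (diag_union lt (fun _ => True) X).

Definition pleasant_ideal (T : Type) (lt : T -> T -> Prop)
  (I : (T -> Prop) -> Prop) : Prop :=
  forall (A : T -> Prop) (X : T -> T -> Prop), I A -> (forall a, I (X a)) ->
    I (diag_union lt A X).

Definition ideal_incl (T : Type) (I J : (T -> Prop) -> Prop) : Prop :=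
  forall X, I X -> J X.

Definition subnormal (T : Type) (lt : T -> T -> Prop)
  (I : (T -> Prop) -> Prop) : Prop :=
  exists J, is_ideal J /\ proper_ideal J /\ normal_ideal lt J /\ ideal_incl I J.

Definition subpleasant (T : Type) (lt : T -> T -> Prop)
  (I : (T -> Prop) -> Prop) : Prop :=
  exists J, is_ideal J /\ proper_ideal J /\ pleasant_ideal lt J /\ ideal_incl I J.

(* Main.v *)
Require Import Defs.
From Stdlib Require Import Classical IndefiniteDescription Relations Wellfounded Arith Lia.

Lemma mychoice (A B : Type) (R : A -> B -> Prop) :
  (forall a, exists b, R a b) -> exists f : A -> B, forall a, R a (f a).
Proof.
  intro H. exists (fun a => proj1_sig (constructive_indefinite_description _ (H a))).
  intro a. exact (proj2_sig (constructive_indefinite_description _ (H a))).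
Qed.

Section WO.
Variable T : Type.
Variable lt : T -> T -> Prop.
Hypothesis Hwo : strict_well_order lt.

Lemma lt_irrefl x : ~ lt x x.
Proof.
  destruct Hwo as [Hwf _].
  induction (Hwf x) as [x _ IH]. intro H. exact (IH x H H).
Qed.

Lemma lt_trans' x y z : lt x y -> lt y z -> lt x z.
Proof. destruct Hwo as [_ [Ht _]]. apply Ht. Qed.

Lemma lt_total x y : lt x y \/ x = y \/ lt y x.
Proof. destruct Hwo as [_ [_ Ht]]. apply Ht. Qed.

Lemma min_exists (P : T -> Prop) (x : T) : P x ->
  exists m, P m /\ forall c, P c -> ~ lt c m.
Proof.
  destruct Hwo as [Hwf _]. revert x.
  intros x. induction (Hwf x) as [x _ IH]. intro Px.
  destruct (classic (exists c, P c /\ lt c x)) as [[c [Pc Hc]]|Hn].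
  - exact (IH c Hc Pc).
  - exists x. split; auto. intros c Pc Hc. apply Hn; eauto.
Qed.

Lemma nat_inj (Hu : uncountable T) : card_le nat T.
Proof.
  destruct (classic (inhabited T)) as [[t0]|Hne].
  2:{ exfalso. apply Hu. exists (fun _ => 0). intros x. exfalso. apply Hne. exact (inhabits x). }
  destruct (min_exists (fun _ => True) t0 I) as [m0 [_ Hm0]].
  assert (Hs : forall x, exists c, (lt x c /\ forall d, lt x d -> ~ lt d c) \/
                                   ((forall d, ~ lt x d) /\ c = x)).
  { intro x. destruct (classic (exists d, lt x d)) as [[d Hd]|Hn].
    - destruct (min_exists (fun d => lt x d) d Hd) as [c [Hc1 Hc2]].
      exists c. left. split; auto.
    - exists x. right. split; auto. intros d Hd. apply Hn; eauto. }
  destruct (mychoice _ _ _ Hs) as [s Hsp].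
  set (f := fix f (n : nat) : T := match n with 0 => m0 | S n => s (f n) end).
  destruct (classic (forall n, exists d, lt (f n) d)) as [HA|HB].
  - assert (Hinc : forall n, lt (f n) (f (S n))).
    { intro n. simpl. destruct (Hsp (f n)) as [[H1 _]|[H1 _]]; auto.
      destruct (HA n) as [d Hd]. exfalso. exact (H1 d Hd). }
    assert (Hinc2 : forall n k, lt (f n) (f (S k + n))).
    { intros n k. induction k. apply Hinc.
      eapply lt_trans'. apply IHk. apply Hinc. }
    exists f. intros x y Hxy.
    destruct (lt_eq_lt_dec x y) as [[H|H]|H]; auto; exfalso.
    + replace y with (S (y - x - 1) + x) in Hxy by lia.
      pose proof (Hinc2 x (y - x - 1)). rewrite Hxy in H0. exact (lt_irrefl _ H0).
    + replace x with (S (x - y - 1) + y) in Hxy by lia.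
      pose proof (Hinc2 y (x - y - 1)). rewrite Hxy in H0. exact (lt_irrefl _ H0).
  - exfalso. apply not_all_ex_not in HB. destruct HB as [n Hn].
    assert (Hall : forall b, exists k, f k = b).
    { intro b. apply NNPP. intro Hnb.
      assert (Hlt : forall k, lt (f k) b).
      { induction k.
        - simpl. destruct (lt_total m0 b) as [H|[H|H]]; auto.
          + exfalso. apply Hnb. exists 0. auto.
          + exfalso. exact (Hm0 b I H).
        - simpl. destruct (Hsp (f k)) as [[H1 H2]|[H1 _]].
          + destruct (lt_total (s (f k)) b) as [H|[H|H]]; auto.
            * exfalso. apply Hnb. exists (S k). auto.
            * exfalso. exact (H2 b IHk H).
          + exfalso. exact (H1 b IHk). }
      apply Hn. exists b. apply Hlt. }
    destruct (mychoice _ _ _ Hall) as [g Hg].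
    apply Hu. exists g. intros x y Hxy. rewrite <- (Hg x), <- (Hg y), Hxy. reflexivity.
Qed.
End WO.

Theorem corollary2p3 (T : Type) (lt : T -> T -> Prop)
  (Hk : regular_uncountable_cardinal lt)
  (I : (T -> Prop) -> Prop) (HI : is_ideal I) :
  subpleasant lt I <-> subnormal lt I.
Proof.
  destruct Hk as [[Hwo Hcard] [_ Hu]].
  split.
  - intros [J [[Jsub [Jun [Jcomp Jsing]]] [Jprop [Jpl Jincl]]]].
    assert (Jempty : J (fun _ => False)).
    { destruct (classic (inhabited T)) as [[t]|Hne].
      - apply (Jsub _ _ (Jsing t)). intros _ [].
      - exfalso. apply Hu. exists (fun _ => 0). intro x. exfalso. apply Hne. exact (inhabits x). }
    set (N := fun Y : T -> Prop => exists X : T -> T -> Prop, (forall a, J (X a)) /\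
               exists Z, J Z /\ forall xi, Y xi -> Z xi \/ diag_union lt (fun _ => True) X xi).
    exists N. split; [|split; [|split]].
    + split; [|split; [|split]].
      * intros X Y [X0 [HX [Z [HZ H]]]] Hs. exists X0. split; auto. exists Z. split; auto.
      * intros Y1 Y2 [X1 [HX1 [Z1 [HZ1 H1]]]] [X2 [HX2 [Z2 [HZ2 H2]]]].
        exists (fun a x => X1 a x \/ X2 a x). split. intro a. apply Jun; auto.
        exists (fun x => Z1 x \/ Z2 x). split. apply Jun; auto.
        intros xi [H|H].
        -- destruct (H1 xi H) as [H'|[al [? [? ?]]]]; [left; left; auto|right; exists al; auto].
        -- destruct (H2 xi H) as [H'|[al [? [? ?]]]]; [left; right; auto|right; exists al; auto].
      * intros K F HK HF.
        assert (HF' : forall j, exists p : (T -> T -> Prop) * (T -> Prop),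
            (forall a, J (fst p a)) /\ J (snd p) /\
            forall xi, F j xi -> snd p xi \/ diag_union lt (fun _ => True) (fst p) xi).
        { intro j. destruct (HF j) as [X [HX [Z [HZ H]]]]. exists (X, Z). auto. }
        destruct (mychoice _ _ _ HF') as [p Hp].
        exists (fun a x => exists j, fst (p j) a x). split.
        { intro a. apply (Jcomp K (fun j => fst (p j) a) HK). intro j. apply (Hp j). }
        exists (fun x => exists j, snd (p j) x). split.
        { apply (Jcomp K (fun j => snd (p j)) HK). intro j. apply (Hp j). }
        intros xi [j Hj]. destruct (Hp j) as [_ [_ H]].
        destruct (H xi Hj) as [H'|[al [? [? ?]]]]; [left; exists j; auto|right; exists al; split; auto; split; auto; exists j; auto].
      * intro a. exists (fun _ _ => False). split; auto. exists (fun x => x = a). split; auto.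
    + intros [X [HX [Z [HZ H]]]].
      set (A := fix A (n : nat) : T -> Prop := match n with 0 => Z
                | S n => fun x => A n x \/ diag_union lt (A n) X x end).
      assert (HA : forall n, J (A n)).
      { induction n. exact HZ. simpl. apply Jun; auto. }
      assert (Hw : J (fun x => exists n, A n x)).
      { apply (Jcomp nat A); auto. split. apply (@nat_inj T lt Hwo Hu). exact Hu. }
      apply Jprop. apply (Jsub _ _ Hw). intros x _.
      destruct Hwo as [Hwf _].
      induction (Hwf x) as [x _ IH].
      destruct (H x Logic.I) as [Hz|[al [Hal [_ Hx]]]].
      * exists 0. exact Hz.
      * destruct (IH al Hal) as [n Hn]. exists (S n). simpl. right. exists al. auto.
    + intros Y HY.
      assert (HY' : forall a, exists p : (T -> T -> Prop) * (T -> Prop),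
            (forall b, J (fst p b)) /\ J (snd p) /\
            forall xi, Y a xi -> snd p xi \/ diag_union lt (fun _ => True) (fst p) xi).
      { intro a. destruct (HY a) as [X [HX [Z [HZ H]]]]. exists (X, Z). auto. }
      destruct (mychoice _ _ _ HY') as [p Hp].
      exists (fun g x => snd (p g) x \/ fst (p g) g x \/
               (exists al : {b | lt b g}, fst (p (proj1_sig al)) g x) \/
               (exists be : {b | lt b g}, fst (p g) (proj1_sig be) x)).
      split.
      { intro g. repeat apply Jun.
        - apply (Hp g).
        - apply (Hp g).
        - apply (Jcomp _ (fun al : {b | lt b g} => fst (p (proj1_sig al)) g) (Hcard g)).
          intro j. apply (Hp _).
        - apply (Jcomp _ (fun be : {b | lt b g} => fst (p g) (proj1_sig be)) (Hcard g)).
          intro j. apply (Hp _). }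
      exists (fun _ => False). split; auto.
      intros xi [al [Hal [_ Hy]]]. right.
      destruct (Hp al) as [_ [_ H]].
      destruct (H xi Hy) as [Hz|[be [Hbe [_ Hx]]]].
      * exists al. split; [auto|]. split; [auto|]. left; auto.
      * destruct (@lt_total T lt Hwo al be) as [Hab|[Hab|Hab]].
        -- exists be. split; [auto|]. split; [auto|]. right; right; left.
           exists (exist _ al Hab). exact Hx.
        -- subst be. exists al. split; [auto|]. split; [auto|]. right; left; auto.
        -- exists al. split; [auto|]. split; [auto|]. right; right; right.
           exists (exist _ be Hab). exact Hx.
    + intros Y HYI. exists (fun _ _ => False). split; auto.
      exists Y. split; auto.
  - intros [J [HJ [Jprop [Jn Jincl]]]]. exists J. split; [auto|]. split; [auto|]. split; auto.
    intros A X HA HX. destruct HJ as [Jsub _].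
    apply (Jsub _ _ (Jn X HX)). intros xi [al [? [? ?]]]. exists al. auto.
Qed.
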